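(* Let $\mathscr{A}$ be a finite alphabet and let $\Xi\subseteq\mathscr{A}^{\mathbb{Z}}$ be a subshift containing a non-periodic element. Then for every $k\in\mathbb{N}$ the GAP-graph $\mathscr{G}_k(\Xi)$ has at least one branching vertex.
   Context: $\mathscr{A}^{\mathbb{Z}}$ has the product topology and shift $(T\xi)(j)=\xi(j-1)$; a subshift is a non-empty closed $T$-invariant subset; $\xi$ is periodic if $T^n\xi=\xi$ for some $n\geq1$. $\mathcal{D}(\Xi)$ is the set of finite subwords of elements of $\Xi$. The GAP-graph $\mathscr{G}_k(\Xi)$ has vertex set $\mathcal{D}(\Xi)\cap\mathscr{A}^k$, edge set $\mathcal{D}(\Xi)\cap\mathscr{A}^{k+1}$, the edge $a_0\cdots a_k$ going from $a_0\cdots a_{k-1}$ to $a_1\cdots a_k$. A vertex $u$ is branching if more than one edge starts at $u$ or more than one edge ends at $u$. *)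

(* Defs.v *)
From mathcomp Require Import all_boot all_order all_algebra.
Set Implicit Arguments. Unset Strict Implicit. Unset Printing Implicit Defensive.
Import GRing.Theory Num.Theory.
Local Open Scope ring_scope.

Section Subshifts.
Variable A : finType.

Definition config := int -> A.

Definition shift (xi : config) : config := fun j => xi (j - 1).

Definition cylinder (xi : config) (n : nat) : config -> Prop :=
  fun eta => forall j : int, `|j| <= n%:Z -> eta j = xi j.

(* closedness in the product topology of discrete A: the complement is open,
   i.e. every point outside X has a basic cylinder neighbourhood disjoint from X *)
Definition closed_config_set (X : config -> Prop) : Prop :=
  forall xi, ~ X xi -> exists n : nat, forall eta, cylinder xi n eta -> ~ X eta.

Definition shift_invariant (X : config -> Prop) : Prop :=
  (forall xi, X xi -> X (shift xi)) /\
  (forall xi, X xi -> exists eta, X eta /\ shift eta = xi).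

Definition subshift (X : config -> Prop) : Prop :=
  (exists xi, X xi) /\ closed_config_set X /\ shift_invariant X.

Definition periodic (xi : config) : Prop :=
  exists n : nat, (1 <= n)%N /\ iter n shift xi = xi.

Definition occurs_at (w : seq A) (xi : config) (i : int) : Prop :=
  w = [seq xi (i + j%:Z) | j <- iota 0 (size w)].

Definition language (X : config -> Prop) (w : seq A) : Prop :=
  exists xi, X xi /\ exists i, occurs_at w xi i.

Definition gap_vertex (X : config -> Prop) (k : nat) (u : seq A) : Prop :=
  language X u /\ size u = k.
Definition gap_edge (X : config -> Prop) (k : nat) (e : seq A) : Prop :=
  language X e /\ size e = k.+1.
Definition edge_source (k : nat) (e : seq A) : seq A := take k e.
Definition edge_target (e : seq A) : seq A := behead e.

Definition branching (X : config -> Prop) (k : nat) (u : seq A) : Prop :=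
  gap_vertex X k u /\
  ((exists e1 e2, gap_edge X k e1 /\ gap_edge X k e2 /\ e1 <> e2 /\
      edge_source k e1 = u /\ edge_source k e2 = u) \/
   (exists e1 e2, gap_edge X k e1 /\ gap_edge X k e2 /\ e1 <> e2 /\
      edge_target e1 = u /\ edge_target e2 = u)).

End Subshifts.

(* Main.v *)
Require Import Defs.
From mathcomp Require Import all_boot all_order all_algebra.
From mathcomp Require Import zify.
From Stdlib Require Import FunctionalExtensionality Classical.
Set Implicit Arguments. Unset Strict Implicit.
Import GRing.Theory Num.Theory.

Definition window (A : finType) (xi : config A) (i : int) (k : nat) : seq A :=
  [seq xi (i + (j%:Z%R))%R | j <- iota 0 k].

Lemma window_occ (A : finType) (xi : config A) i k : occurs_at (window xi i k) xi i.
Proof. by rewrite /occurs_at /window size_map size_iota. Qed.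

Lemma window_size (A : finType) (xi : config A) i k : size (window xi i k) = k.
Proof. by rewrite /window size_map size_iota. Qed.

Lemma window_S (A : finType) (xi : config A) i k :
  window xi i k.+1 = xi i :: window xi (i + 1)%R k.
Proof.
rewrite /window /= GRing.addr0; congr (_ :: _).
rewrite -(addn0 1%N) iotaDl -map_comp; apply: eq_map => j /=.
congr (xi _); rewrite /= PoszD; lia.
Qed.

Lemma window_take (A : finType) (xi : config A) i k :
  take k (window xi i k.+1) = window xi i k.
Proof.
rewrite /window -map_take; congr map.
by rewrite -addn1 iotaD take_size_cat ?size_iota.
Qed.

Lemma iter_shift (A : finType) (xi : config A) n :
  iter n (@shift A) xi = fun j => xi (j - n%:Z%R)%R.
Proof.
elim: n => [|n IH] /=.
  by apply: functional_extensionality => j; rewrite GRing.subr0.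
rewrite IH; apply: functional_extensionality => j; rewrite /shift.
congr (xi _); lia.
Qed.

Theorem corollary6 (A : finType) (X : config A -> Prop) :
  subshift X -> (exists xi, X xi /\ ~ periodic xi) ->
  forall k : nat, exists u : seq A, branching X k u.
Proof.
move=> _ [xi [Xxi nper]] k.
apply: NNPP => NB.
have NB' : forall u, ~ branching X k u by move=> u Bu; apply: NB; exists u.
pose W n := window xi n k.
pose E n := window xi n k.+1.
have vert n : gap_vertex X k (W n).
  by split; [exists xi; split=> //; exists n; apply: window_occ | apply: window_size].
have edg n : gap_edge X k (E n).
  by split; [exists xi; split=> //; exists n; apply: window_occ | apply: window_size].
have src n : edge_source k (E n) = W n by apply: window_take.
have tgt n : edge_target (E n) = W (n + 1)%R by rewrite /edge_target /E window_S.
have out a b : W a = W b -> E a = E b.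
  move=> Hab; case: (eqVneq (E a) (E b)) => [//|/eqP ne].
  exfalso; apply: (NB' (W a)); split=> //; left.
  by exists (E a), (E b); rewrite !src Hab.
have inn a b : W (a + 1)%R = W (b + 1)%R -> E a = E b.
  move=> Hab; case: (eqVneq (E a) (E b)) => [//|/eqP ne].
  exfalso; apply: (NB' (W (a + 1)%R)); split=> //; right.
  by exists (E a), (E b); rewrite !tgt Hab.
have fwd a b : W a = W b -> W (a + 1)%R = W (b + 1)%R.
  by move=> H; rewrite -!tgt (out _ _ H).
have bwd a b : W (a + 1)%R = W (b + 1)%R -> W a = W b.
  by move=> H; rewrite -!src (inn _ _ H).
pose N := #|{: {ffun 'I_k -> A}}|.
pose f (i : 'I_N.+1) : {ffun 'I_k -> A} := [ffun j : 'I_k => xi (i%:Z%R + (j : nat)%:Z%R)%R].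
have : ~~ injectiveb f.
  apply/negP => /injectiveP inj; have := leq_card f inj.
  by rewrite card_ord ltnn.
case/injectivePn => i [j] neq fij.
have Wij : forall i j : 'I_N.+1, f i = f j -> W i = W j.
  move=> i' j' H; rewrite /W /window; apply/eq_in_map => l; rewrite mem_iota add0n => /andP[_ lk].
  by have := congr1 (fun g : {ffun 'I_k -> A} => g (Ordinal lk)) H; rewrite !ffunE.
wlog lt : i j neq fij / (i < j)%N.
  move=> H; case: (ltngtP i j) => c; first exact: (H i j).
    by apply: (H j i) => //; rewrite eq_sym.
  by move: neq; rewrite -val_eqE /= c eqxx.
set a := (i : nat)%:Z%R; set b := (j : nat)%:Z%R.
have Wab : W a = W b by apply: Wij.
have allW : forall n : nat, W (a + n%:Z%R)%R = W (b + n%:Z%R)%R /\ W (a - n%:Z%R)%R = W (b - n%:Z%R)%R.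
  elim=> [|n [IH1 IH2]]; first by rewrite !GRing.addr0 ?GRing.subr0 ?GRing.oppr0 ?GRing.addr0.
  split.
    have e1 : (a + n.+1%:Z%R = (a + n%:Z%R) + 1)%R by lia.
    have e2 : (b + n.+1%:Z%R = (b + n%:Z%R) + 1)%R by lia.
    by rewrite e1 e2; apply: fwd.
  apply: bwd.
  have e1 : (a - n.+1%:Z%R + 1 = a - n%:Z%R)%R by lia.
  have e2 : (b - n.+1%:Z%R + 1 = b - n%:Z%R)%R by lia.
  by rewrite e1 e2.
have allx : forall m : int, xi (a + m)%R = xi (b + m)%R.
  move=> m.
  have HE : E (a + m)%R = E (b + m)%R.
    apply: out; case: m => n; first by case: (allW n).
    have e1 : (a + Negz n = a - n.+1%:Z%R)%R by lia.
    have e2 : (b + Negz n = b - n.+1%:Z%R)%R by lia.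
    by rewrite e1 e2; case: (allW n.+1).
  by move: HE; rewrite /E !window_S => -[].
apply: nper; exists (j - i)%N; split; first by rewrite subn_gt0.
rewrite iter_shift; apply: functional_extensionality => x.
have := allx (x - b)%R.
have e1 : (a + (x - b) = x - (j - i)%N%:Z%R)%R by rewrite /a /b; lia.
have e2 : (b + (x - b) = x)%R by lia.
by rewrite e1 e2.
Qed.
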